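(* Let $\mathbb{X},\mathbb{Y}$ be real normed linear spaces and let $T\in\mathbb{B}(\mathbb{X},\mathbb{Y})$, $T\neq 0$. Then the following are equivalent: (i) $T$ is a smooth point of $\mathbb{B}(\mathbb{X},\mathbb{Y})$ (with the operator norm). (ii) For every $A\in\mathbb{B}(\mathbb{X},\mathbb{Y})$: $T\perp_B A$ if and only if for every semi-inner-product $[\cdot,\cdot]$ on $\mathbb{Y}$ compatible with the norm and every norming sequence $\{x_n\}$ for $T$, every subsequential limit of the real sequence $\{[Ax_n,Tx_n]\}$ equals $0$. *)

(* Defs.v *)
From Stdlib Require Import Reals Lra ClassicalEpsilon.
Open Scope R_scope.

Record NormedSpace : Type := MkNormedSpace {
  ns_car :> Type;
  ns_zero : ns_car;
  ns_add : ns_car -> ns_car -> ns_car;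
  ns_opp : ns_car -> ns_car;
  ns_scal : R -> ns_car -> ns_car;
  ns_norm : ns_car -> R;
  ns_addA : forall x y z, ns_add x (ns_add y z) = ns_add (ns_add x y) z;
  ns_addC : forall x y, ns_add x y = ns_add y x;
  ns_add0 : forall x, ns_add x ns_zero = x;
  ns_addN : forall x, ns_add x (ns_opp x) = ns_zero;
  ns_scalA : forall a b x, ns_scal a (ns_scal b x) = ns_scal (a * b) x;
  ns_scal1 : forall x, ns_scal 1 x = x;
  ns_scalDv : forall a x y, ns_scal a (ns_add x y) = ns_add (ns_scal a x) (ns_scal a y);
  ns_scalDs : forall a b x, ns_scal (a + b) x = ns_add (ns_scal a x) (ns_scal b x);
  ns_norm_eq0 : forall x, ns_norm x = 0 -> x = ns_zero;
  ns_normZ : forall a x, ns_norm (ns_scal a x) = Rabs a * ns_norm x;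
  ns_normD : forall x y, ns_norm (ns_add x y) <= ns_norm x + ns_norm y
}.

Arguments ns_zero {_}.
Arguments ns_add {_} _ _.
Arguments ns_opp {_} _.
Arguments ns_scal {_} _ _.
Arguments ns_norm {_} _.

Section Operators.
Variables X Y : NormedSpace.

Definition bounded_linear (T : X -> Y) : Prop :=
  (forall x y, T (ns_add x y) = ns_add (T x) (T y)) /\
  (forall a x, T (ns_scal a x) = ns_scal a (T x)) /\
  (exists M, forall x, ns_norm (T x) <= M * ns_norm x).

(* Operator norm: sup { ||T x|| : ||x|| <= 1 } (0 if the sup does not exist,
   which never happens for bounded T). *)
Definition opnorm (T : X -> Y) : R :=
  let E := fun r => exists x : X, ns_norm x <= 1 /\ r = ns_norm (T x) in
  match excluded_middle_informative (exists m, is_lub E m) with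
  | left H => proj1_sig (constructive_indefinite_description _ H)
  | right _ => 0
  end.

Definition op_add (T A : X -> Y) : X -> Y := fun x => ns_add (T x) (A x).
Definition op_scal (l : R) (A : X -> Y) : X -> Y := fun x => ns_scal l (A x).
Definition op_zero : X -> Y := fun _ => ns_zero.

Definition BJ_orth (T A : X -> Y) : Prop :=
  forall l : R, opnorm T <= opnorm (op_add T (op_scal l A)).

(* Bounded linear functionals on B(X,Y) (functionals are only relevant on
   bounded linear operators). f has norm <= 1 on B(X,Y). *)
Definition support_functional (T : X -> Y) (f : (X -> Y) -> R) : Prop :=
  (forall A B, bounded_linear A -> bounded_linear B ->
     f (op_add A B) = f A + f B) /\
  (forall a A, bounded_linear A -> f (op_scal a A) = a * f A) /\
  (forall A, bounded_linear A -> Rabs (f A) <= opnorm A) /\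
  f T = opnorm T.

Definition smooth_point (T : X -> Y) : Prop :=
  (exists f, support_functional T f) /\
  (forall f g, support_functional T f -> support_functional T g ->
     forall A, bounded_linear A -> f A = g A).

Definition norming_sequence (T : X -> Y) (xs : nat -> X) : Prop :=
  (forall n, ns_norm (xs n) = 1) /\
  Un_cv (fun n => ns_norm (T (xs n))) (opnorm T).

End Operators.

Definition compatible_sip (Y : NormedSpace) (s : Y -> Y -> R) : Prop :=
  (forall a x y z, s (ns_add (ns_scal a x) y) z = a * s x z + s y z) /\
  (forall x, x <> ns_zero -> 0 < s x x) /\
  (forall x y, (s x y) ^ 2 <= s x x * s y y) /\
  (forall a x y, s x (ns_scal a y) = a * s x y) /\
  (forall x, s x x = (ns_norm x) ^ 2).

Definition subseq_limit (u : nat -> R) (L : R) : Prop :=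
  exists phi : nat -> nat, (forall n, (phi n < phi (S n))%nat) /\
    Un_cv (fun n => u (phi n)) L.

(* Main.v *)
Require Import Defs.
From Stdlib Require Import Reals.
Open Scope R_scope.
From Stdlib Require Import Reals Lra ClassicalEpsilon Classical FunctionalExtensionality PropExtensionality.
From mathcomp Require boolp classical_sets.
Open Scope R_scope.

Definition Rinf (F : R -> Prop) : R :=
  match excluded_middle_informative (exists m, is_lub (fun r => F (-r)) m) with
  | left H => - proj1_sig (constructive_indefinite_description _ H)
  | right _ => 0 end.

Lemma Rinf_spec F : (exists x, F x) -> (exists b, forall x, F x -> b <= x) ->
  (forall x, F x -> Rinf F <= x) /\ (forall c, (forall x, F x -> c <= x) -> c <= Rinf F).
Proof.
  intros [x0 Hx0] [b Hb].
  assert (Hex : exists m, is_lub (fun r => F (-r)) m).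
  { destruct (completeness (fun r => F (-r))) as [m Hm].
    - exists (-b). intros r Hr. specialize (Hb _ Hr). lra.
    - exists (-x0). now rewrite Ropp_involutive.
    - now exists m. }
  unfold Rinf. destruct (excluded_middle_informative _) as [H|H]; [|contradiction].
  destruct (constructive_indefinite_description _ H) as [m [Hub Hl]]; simpl.
  split.
  - intros x Hx. assert (-x <= m). { apply Hub. now rewrite Ropp_involutive. } lra.
  - intros c Hc. assert (m <= -c). { apply Hl. intros r Hr. specialize (Hc _ Hr). lra. } lra.
Qed.

Lemma zorn_pre (T : Type) (t0 : T) (Rl : T -> T -> Prop) :
  (forall t, Rl t t) -> (forall r s t, Rl r s -> Rl s t -> Rl r t) ->
  (forall A : T -> Prop, (forall s t, A s -> A t -> Rl s t \/ Rl t s) ->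
     exists t, forall s, A s -> Rl s t) ->
  exists t, forall s, Rl t s -> Rl s t.
Proof.
  intros H1 H2 H3.
  destruct (@classical_sets.ZL_preorder T t0 (fun a b => boolp.asbool (Rl a b))) as [t Ht].
  - intro t. apply boolp.asboolT. apply H1.
  - intros r s t Hrs Hst. apply boolp.asboolT.
    apply boolp.asboolW in Hrs. apply boolp.asboolW in Hst. eauto.
  - intros A HA. destruct (H3 A) as [t Ht].
    + intros s t Hs Ht. destruct (HA s t Hs Ht) as [h|h]; [left|right];
      apply boolp.asboolW in h; exact h.
    + exists t. intros s Hs. apply boolp.asboolT. auto.
  - exists t. intros s Hs. specialize (Ht s (boolp.asboolT Hs)).
    apply boolp.asboolW in Ht. exact Ht.
Qed.

From Stdlib Require Import Reals Lra ClassicalEpsilon Classical FunctionalExtensionality PropExtensionality.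
Open Scope R_scope.

Record VS := MkVS {
  vcar :> Type;
  vzero : vcar;
  vadd : vcar -> vcar -> vcar;
  vscal : R -> vcar -> vcar;
  vaddA : forall x y z, vadd x (vadd y z) = vadd (vadd x y) z;
  vaddC : forall x y, vadd x y = vadd y x;
  vadd0 : forall x, vadd x vzero = x;
  vscal0 : forall x, vscal 0 x = vzero;
  vscalA : forall a b x, vscal a (vscal b x) = vscal (a*b) x;
  vscal1 : forall x, vscal 1 x = x;
  vscalDv : forall a x y, vscal a (vadd x y) = vadd (vscal a x) (vscal a y);
  vscalDs : forall a b x, vscal (a+b) x = vadd (vscal a x) (vscal b x)
}.
Arguments vzero {_}. Arguments vadd {_} _ _. Arguments vscal {_} _ _.

Definition has_inf (F : R -> Prop) := (exists x, F x) /\ (exists b, forall x, F x -> b <= x).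

Lemma inf_le F x : has_inf F -> F x -> Rinf F <= x.
Proof. intros [H1 H2] Hx. now apply (Rinf_spec F H1 H2). Qed.
Lemma inf_ge F c : has_inf F -> (forall x, F x -> c <= x) -> c <= Rinf F.
Proof. intros [H1 H2] Hx. now apply (Rinf_spec F H1 H2). Qed.

Lemma inf_add_pattern F1 F2 a : has_inf F1 -> has_inf F2 ->
  (forall x y, F1 x -> F2 y -> a <= x + y) -> a <= Rinf F1 + Rinf F2.
Proof.
  intros H1 H2 H.
  assert (forall y, F2 y -> a - y <= Rinf F1).
  { intros y Hy. apply inf_ge; auto. intros x Hx. specialize (H x y Hx Hy). lra. }
  assert (a - Rinf F1 <= Rinf F2).
  { apply inf_ge; auto. intros y Hy. specialize (H0 y Hy). lra. }
  lra.
Qed.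

Section HB.
Variable V : VS.
Variable D : V -> Prop.
Hypothesis D0 : D vzero.
Hypothesis Dadd : forall u v, D u -> D v -> D (vadd u v).
Hypothesis Dscal : forall c u, D u -> D (vscal c u).

Definition sublin (p : V -> R) :=
  (forall u v, D u -> D v -> p (vadd u v) <= p u + p v) /\
  (forall c u, 0 < c -> D u -> p (vscal c u) = c * p u) /\ p vzero = 0.

Definition linD (f : V -> R) :=
  (forall u v, D u -> D v -> f (vadd u v) = f u + f v) /\
  (forall c u, D u -> f (vscal c u) = c * f u).

Lemma vI1 (u : V) t (v : V) : vadd (vadd u (vscal t v)) (vscal (-1) u) = vscal t v.
Proof.
  rewrite ((vaddC V) u (vscal t v)), <- (vaddA V).
  rewrite <- ((vscal1 V) u) at 1. rewrite <- (vscalDs V).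
  replace (1 + -1) with 0 by ring. now rewrite (vscal0 V), (vadd0 V).
Qed.

Lemma vI2 (u v : V) : vadd u (vscal 0 v) = u.
Proof. now rewrite (vscal0 V), (vadd0 V). Qed.

Lemma vI3 (v : V) : vadd (vscal (-1) v) (vscal 1 v) = vzero.
Proof. rewrite <- (vscalDs V). replace (-1 + 1) with 0 by ring. apply (vscal0 V). Qed.

Lemma vI4 (u1 u2 : V) t1 t2 (v : V) :
  vadd (vadd u1 u2) (vscal (t1+t2) v) = vadd (vadd u1 (vscal t1 v)) (vadd u2 (vscal t2 v)).
Proof.
  rewrite (vscalDs V).
  rewrite !(vaddA V). f_equal.
  rewrite <- !(vaddA V). f_equal. apply (vaddC V).
Qed.

Lemma vI5 c (u : V) t (v : V) : vscal c (vadd u (vscal t v)) = vadd (vscal c u) (vscal (c*t) v).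
Proof. now rewrite (vscalDv V), (vscalA V). Qed.

Lemma vI6 t (v : V) : vadd vzero (vscal t v) = vscal t v.
Proof. now rewrite (vaddC V), (vadd0 V). Qed.

Lemma vI8 c (u : V) : vscal (-c) (vscal (-1) u) = vscal c u.
Proof. rewrite (vscalA V). f_equal. ring. Qed.

Lemma vI9 (u : V) : vadd u (vscal (-1) u) = vzero.
Proof. rewrite <- ((vscal1 V) u) at 1. rewrite <- (vscalDs V).
  replace (1 + -1) with 0 by ring. apply (vscal0 V). Qed.

Lemma vI7 (u v : V) : vadd (vadd u v) (vscal (-1) v) = u.
Proof. rewrite <- (vaddA V), vI9. apply (vadd0 V). Qed.

Lemma sublin_hom0 p t (u : V) : sublin p -> 0 <= t -> D u -> p (vscal t u) = t * p u.
Proof.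
  intros [_ [Hh Hz]] Ht Hu. destruct (Rle_lt_or_eq_dec _ _ Ht) as [Ht'|Ht'].
  - now apply Hh.
  - subst. rewrite (vscal0 V), Hz. ring.
Qed.

Lemma sublin_lb p (u : V) : sublin p -> D u -> 0 <= p u + p (vscal (-1) u).
Proof.
  intros Hp Hu. destruct Hp as [Ha [Hh Hz]].
  pose proof (Ha u (vscal (-1) u) Hu (Dscal _ _ Hu)). rewrite vI9, Hz in H. exact H.
Qed.

Definition shiftF (q : V -> R) (v u : V) : R -> Prop :=
  fun r => exists t, 0 <= t /\ r = q (vadd u (vscal t v)) - t * q v.
Definition shift (q : V -> R) (v : V) (u : V) : R := Rinf (shiftF q v u).

Lemma shiftF_inf q (v u : V) : sublin q -> D v -> D u -> has_inf (shiftF q v u).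
Proof.
  intros Hq Hv Hu. split.
  - exists (q (vadd u (vscal 0 v)) - 0 * q v). exists 0. split; [lra|reflexivity].
  - exists (- q (vscal (-1) u)). intros x [t [Ht ->]].
    pose proof Hq as [Ha Hr].
    pose proof (Ha (vadd u (vscal t v)) (vscal (-1) u) (Dadd _ _ Hu (Dscal _ _ Hv)) (Dscal _ _ Hu)).
    rewrite vI1 in H. rewrite (sublin_hom0 q t v) in H; auto. lra.
Qed.

Lemma shift_props q (v : V) : sublin q -> D v ->
  sublin (shift q v) /\ (forall u, D u -> shift q v u <= q u) /\
  shift q v (vscal (-1) v) <= - q v.
Proof.
  intros Hq Hv. pose proof Hq as [Ha [Hh Hz]].
  split; [split; [|split]|split].
  - intros u1 u2 Hu1 Hu2. unfold shift.
    apply inf_add_pattern; try apply shiftF_inf; auto.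
    intros x y [t1 [Ht1 ->]] [t2 [Ht2 ->]].
    eapply Rle_trans.
    + apply inf_le. apply shiftF_inf; auto.
      exists (t1 + t2). split; [lra|reflexivity].
    + rewrite vI4. pose proof (Ha _ _ (Dadd _ _ Hu1 (Dscal t1 _ Hv)) (Dadd _ _ Hu2 (Dscal t2 _ Hv))).
      lra.
  - intros c u Hc Hu. unfold shift. apply Rle_antisym.
    + assert (H : Rinf (shiftF q v (vscal c u)) / c <= Rinf (shiftF q v u)).
      { apply inf_ge. apply shiftF_inf; auto. intros x [t [Ht ->]].
        assert (Rinf (shiftF q v (vscal c u)) <= c * (q (vadd u (vscal t v)) - t * q v)).
        { apply inf_le. apply shiftF_inf; auto. exists (c * t). split.
          - apply Rmult_le_pos; lra.
          - rewrite <- vI5. rewrite Hh; auto. ring. }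
        apply (Rmult_le_reg_l c); auto. replace (c * (Rinf (shiftF q v (vscal c u)) / c)) with (Rinf (shiftF q v (vscal c u))) by (field; lra). lra. }
      apply (Rmult_le_compat_l c) in H; [|lra].
      replace (c * (Rinf (shiftF q v (vscal c u)) / c)) with (Rinf (shiftF q v (vscal c u))) in H
        by (field; lra). exact H.
    + apply inf_ge. apply shiftF_inf; auto. intros x [t [Ht ->]].
      replace (vadd (vscal c u) (vscal t v)) with (vscal c (vadd u (vscal (t/c) v))).
      2:{ rewrite vI5. f_equal. f_equal. field. lra. }
      rewrite Hh; auto.
      assert (Rinf (shiftF q v u) <= q (vadd u (vscal (t / c) v)) - t / c * q v).
      { apply inf_le. apply shiftF_inf; auto. exists (t/c). split; auto.
        apply Rmult_le_pos; auto. left. apply Rinv_0_lt_compat; auto. }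
      apply (Rmult_le_compat_l c) in H; [|lra].
      replace (t * q v) with (c * (t / c * q v)) by (field; lra). lra.
  - unfold shift. apply Rle_antisym.
    + apply inf_le. apply shiftF_inf; auto. exists 0. split; [lra|].
      rewrite vI6, (vscal0 V), Hz. ring.
    + apply inf_ge. apply shiftF_inf; auto. intros x [t [Ht ->]].
      rewrite vI6, (sublin_hom0 q); auto. lra.
  - intros u Hu. unfold shift. eapply Rle_trans.
    + apply inf_le. apply shiftF_inf; auto. exists 0. split; [lra|reflexivity].
    + rewrite vI2. lra.
  - unfold shift. eapply Rle_trans.
    + apply inf_le. apply shiftF_inf; auto. exists 1. split; [lra|reflexivity].
    + rewrite vI3, Hz. lra.
Qed.

Lemma min_sublinear p : sublin p -> exists f, linD f /\ forall u, D u -> f u <= p u.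
Proof.
  intros Hp.
  set (ST := {q : V -> R | sublin q /\ forall u, D u -> q u <= p u}).
  set (Rl := fun a b : ST => forall u, D u -> proj1_sig b u <= proj1_sig a u).
  assert (t0 : ST). { exists p. split; auto. intros; lra. }
  destruct (zorn_pre ST t0 Rl) as [[q [Hq Hqp]] Hmax].
  - intros t u _. lra.
  - intros r s t H1 H2 u Hu. specialize (H1 u Hu); specialize (H2 u Hu). lra.
  - intros A HA.
    destruct (classic (exists a, A a)) as [[a0 Ha0]|Hne].
    2:{ exists t0. intros s Hs. exfalso. apply Hne. eauto. }
    set (F := fun u r => exists a, A a /\ r = proj1_sig a u).
    assert (HF : forall u, D u -> has_inf (F u)).
    { intros u Hu. split. exists (proj1_sig a0 u). exists a0; auto.
      exists (- p (vscal (-1) u)). intros x [a [Ha ->]]. destruct a as [qa [Hqa Hqap]]. simpl.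
      pose proof (sublin_lb qa u Hqa Hu). pose proof (Hqap _ (Dscal (-1) u Hu)). lra. }
    set (qi := fun u => Rinf (F u)).
    assert (Hqi : sublin qi /\ forall u, D u -> qi u <= p u).
    { split; [split; [|split]|].
      - intros u v Hu Hv. unfold qi. apply inf_add_pattern; auto.
        intros x y [a [Ha ->]] [b [Hb ->]].
        destruct (HA a b Ha Hb) as [Hab|Hab].
        + eapply Rle_trans. apply inf_le; auto. exists b; split; eauto.
          pose proof (proj1 (proj1 (proj2_sig b)) u v Hu Hv).
          specialize (Hab u Hu). simpl in Hab. lra.
        + eapply Rle_trans. apply inf_le; auto. exists a; split; eauto.
          pose proof (proj1 (proj1 (proj2_sig a)) u v Hu Hv).
          specialize (Hab v Hv). simpl in Hab. lra.
      - intros c u Hc Hu. unfold qi. apply Rle_antisym.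
        + assert (H : Rinf (F (vscal c u)) / c <= Rinf (F u)).
          { apply inf_ge; auto. intros x [a [Ha ->]].
            assert (Rinf (F (vscal c u)) <= c * proj1_sig a u).
            { apply inf_le; auto. exists a. split; auto.
              symmetry; apply (proj1 (proj2 (proj1 (proj2_sig a)))); auto. }
            apply (Rmult_le_reg_l c); auto.
            replace (c * (Rinf (F (vscal c u)) / c)) with (Rinf (F (vscal c u))) by (field; lra). lra. }
          apply (Rmult_le_compat_l c) in H; [|lra].
          replace (c * (Rinf (F (vscal c u)) / c)) with (Rinf (F (vscal c u))) in H by (field; lra).
          exact H.
        + apply inf_ge; auto. intros x [a [Ha ->]].
          assert (Rinf (F u) <= proj1_sig a u). { apply inf_le; auto. exists a; auto. }
          rewrite (proj1 (proj2 (proj1 (proj2_sig a)))); auto.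
          apply Rmult_le_compat_l; lra.
      - unfold qi. apply Rle_antisym.
        + apply inf_le; auto. exists a0. split; auto.
          symmetry. apply (proj2 (proj2 (proj1 (proj2_sig a0)))).
        + apply inf_ge; auto. intros x [a [Ha ->]].
          rewrite (proj2 (proj2 (proj1 (proj2_sig a)))). lra.
      - intros u Hu. unfold qi. eapply Rle_trans.
        + apply inf_le with (x := proj1_sig a0 u); auto. exists a0; auto.
        + apply (proj2 (proj2_sig a0)); auto. }
    exists (exist _ qi Hqi). intros s Hs u Hu. simpl. apply inf_le; auto. exists s; auto.
  - assert (Hodd : forall v, D v -> q (vscal (-1) v) = - q v).
    { intros v Hv. destruct (shift_props q v Hq Hv) as [Hs [Hle Hneg]].
      assert (Hsp : sublin (shift q v) /\ forall u, D u -> shift q v u <= p u).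
      { split; auto. intros u Hu. eapply Rle_trans; [apply Hle; auto|apply Hqp; auto]. }
      specialize (Hmax (exist _ (shift q v) Hsp) Hle (vscal (-1) v) (Dscal _ _ Hv)).
      simpl in Hmax. pose proof (sublin_lb q v Hq Hv). lra. }
    exists q. split; auto. pose proof Hq as [Ha [Hh Hz]]. split.
    + intros u v Hu Hv. apply Rle_antisym; auto.
      pose proof (Ha (vadd u v) (vscal (-1) v) (Dadd _ _ Hu Hv) (Dscal _ _ Hv)).
      rewrite vI7, Hodd in H; auto. lra.
    + intros c u Hu. destruct (Rlt_or_le 0 c) as [Hc|Hc]; auto.
      destruct (Req_dec c 0) as [->|Hc0].
      * rewrite (vscal0 V), Hz. ring.
      * rewrite <- vI8. rewrite Hh; try lra; auto. rewrite Hodd; auto. ring.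
Qed.

Lemma HB_point p y : sublin p -> D y ->
  exists f, linD f /\ (forall u, D u -> f u <= p u) /\ f y = p y.
Proof.
  intros Hp Hy. destruct (shift_props p y Hp Hy) as [Hs [Hle Hneg]].
  destruct (min_sublinear _ Hs) as [f [Hf Hfle]].
  exists f. split; auto. split.
  - intros u Hu. eapply Rle_trans; [apply Hfle|apply Hle]; auto.
  - apply Rle_antisym.
    + eapply Rle_trans; [apply Hfle|apply Hle]; auto.
    + pose proof (Hfle _ (Dscal (-1) y Hy)). rewrite (proj2 Hf) in H; auto. lra.
Qed.
End HB.

From Stdlib Require Import Reals Lra ClassicalEpsilon Classical FunctionalExtensionality PropExtensionality.
Open Scope R_scope.

Lemma Rabs_m1 : Rabs (-1) = 1.
Proof. unfold Rabs; destruct Rcase_abs; lra. Qed.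

Section NS.
Variable Y : NormedSpace.

Lemma ns_scal0 (x : Y) : ns_scal 0 x = ns_zero.
Proof.
  set (z := ns_scal 0 x).
  assert (Hz : ns_add z z = z).
  { unfold z. rewrite <- ns_scalDs. f_equal. ring. }
  rewrite <- (ns_addN _ z). rewrite <- Hz at 2. rewrite <- ns_addA, ns_addN, ns_add0. reflexivity.
Qed.

Lemma ns_scal_zero a : ns_scal a (@ns_zero Y) = ns_zero.
Proof. rewrite <- (ns_scal0 ns_zero), ns_scalA. rewrite Rmult_0_r. reflexivity. Qed.

Definition VSY : VS := MkVS Y ns_zero ns_add ns_scal (ns_addA Y) (ns_addC Y) (ns_add0 Y)
  ns_scal0 (ns_scalA Y) (ns_scal1 Y) (ns_scalDv Y) (ns_scalDs Y).

Lemma norm_zero : ns_norm (@ns_zero Y) = 0.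
Proof. rewrite <- (ns_scal0 ns_zero), ns_normZ, Rabs_R0. ring. Qed.

Lemma norm_nonneg (x : Y) : 0 <= ns_norm x.
Proof.
  pose proof (ns_normD _ x (ns_scal (-1) x)).
  pose proof (vI9 VSY x). simpl in H0. rewrite H0, norm_zero, ns_normZ in H.
  rewrite Rabs_m1 in H. lra.
Qed.

Lemma norm_pos (x : Y) : x <> ns_zero -> 0 < ns_norm x.
Proof.
  intros H. destruct (norm_nonneg x) as [h|h]; auto. exfalso. apply H. apply ns_norm_eq0. auto.
Qed.

Lemma norm_opp (x : Y) : ns_norm (ns_scal (-1) x) = ns_norm x.
Proof. rewrite ns_normZ, Rabs_m1. ring. Qed.

Lemma add4 (a b c d : Y) : ns_add (ns_add a b) (ns_add c d) = ns_add (ns_add a c) (ns_add b d).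
Proof.
  rewrite <- !ns_addA. f_equal. rewrite !ns_addA. f_equal. apply ns_addC.
Qed.
End NS.

Section Ops.
Variables X Y : NormedSpace.

Definition VSF : VS.
Proof.
  refine (MkVS (X -> Y) (op_zero X Y) (op_add X Y) (op_scal X Y) _ _ _ _ _ _ _ _);
  intros; apply functional_extensionality; intro; unfold op_add, op_scal, op_zero.
  - apply ns_addA.
  - apply ns_addC.
  - apply ns_add0.
  - apply ns_scal0.
  - apply ns_scalA.
  - apply ns_scal1.
  - apply ns_scalDv.
  - apply ns_scalDs.
Defined.

Definition Eop (T : X -> Y) := fun r => exists x : X, ns_norm x <= 1 /\ r = ns_norm (T x).

Lemma lin_zero (T : X -> Y) : bounded_linear X Y T -> T ns_zero = ns_zero.
Proof.
  intros [_ [Hs _]]. rewrite <- (ns_scal0 X ns_zero), Hs. apply ns_scal0.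
Qed.

Lemma opnorm_lub T : bounded_linear X Y T -> is_lub (Eop T) (opnorm X Y T).
Proof.
  intros HT.
  assert (Hex : exists m, is_lub (Eop T) m).
  { destruct HT as [Ha [Hs [M HM]]].
    destruct (completeness (Eop T)) as [m Hm].
    - exists (Rabs M). intros r [x [Hx ->]]. eapply Rle_trans; [apply HM|].
      pose proof (norm_nonneg X x). eapply Rle_trans; [apply Rmult_le_compat_r; eauto; apply RRle_abs|].
      pose proof (Rabs_pos M). nra.
    - exists (ns_norm (T ns_zero)). exists ns_zero. split; auto. rewrite norm_zero. lra.
    - eauto. }
  unfold opnorm. destruct (excluded_middle_informative _) as [H|H]; [|contradiction].
  destruct (constructive_indefinite_description _ H) as [m Hm]. simpl. exact Hm.
Qed.

Lemma opnorm_nonneg T : bounded_linear X Y T -> 0 <= opnorm X Y T.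
Proof.
  intros HT. destruct (opnorm_lub T HT) as [Hub _]. apply Hub. exists ns_zero.
  split. rewrite norm_zero; lra. rewrite lin_zero, norm_zero; auto.
Qed.

Lemma opnorm_bound T x : bounded_linear X Y T -> ns_norm (T x) <= opnorm X Y T * ns_norm x.
Proof.
  intros HT. destruct (classic (x = ns_zero)) as [->|Hx].
  - rewrite lin_zero, !norm_zero; auto. lra.
  - pose proof (norm_pos X x Hx) as Hn.
    destruct (opnorm_lub T HT) as [Hub _].
    assert (ns_norm (T (ns_scal (/ ns_norm x) x)) <= opnorm X Y T).
    { apply Hub. exists (ns_scal (/ ns_norm x) x). split; auto.
      rewrite ns_normZ, Rabs_pos_eq. field_simplify; lra. left. apply Rinv_0_lt_compat; auto. }
    destruct HT as [_ [Hs _]]. rewrite Hs, ns_normZ, Rabs_pos_eq in H.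
    2:{ left. apply Rinv_0_lt_compat; auto. }
    apply (Rmult_le_compat_l (ns_norm x)) in H; [|lra].
    field_simplify in H; lra.
Qed.

Lemma opnorm_le T c : bounded_linear X Y T -> (forall x, ns_norm x <= 1 -> ns_norm (T x) <= c) ->
  opnorm X Y T <= c.
Proof. intros HT H. destruct (opnorm_lub T HT) as [_ Hl]. apply Hl. intros r [x [Hx ->]]. auto. Qed.

Lemma opnorm_approx T eps : bounded_linear X Y T -> 0 < eps ->
  exists x, ns_norm x <= 1 /\ opnorm X Y T - eps < ns_norm (T x).
Proof.
  intros HT He. apply NNPP. intro H.
  assert (opnorm X Y T <= opnorm X Y T - eps).
  { apply opnorm_le; auto. intros x Hx. apply Rnot_lt_le. intro H'. apply H. eauto. }
  lra.
Qed.

Lemma opnorm_pos T : bounded_linear X Y T -> T <> op_zero X Y -> 0 < opnorm X Y T.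
Proof.
  intros HT HT0.
  assert (exists x, T x <> ns_zero).
  { apply NNPP. intro H. apply HT0. apply functional_extensionality. intro x.
    apply NNPP. intro H'. apply H. eauto. }
  destruct H as [x Hx].
  assert (x <> ns_zero). { intro; subst. apply Hx. apply lin_zero; auto. }
  pose proof (norm_pos _ _ Hx). pose proof (norm_pos _ _ H). pose proof (opnorm_bound T x HT).
  pose proof (opnorm_nonneg T HT). destruct H3 as [h|h]; auto. rewrite <- h in H2. lra.
Qed.

Lemma bl_zero : bounded_linear X Y (op_zero X Y).
Proof.
  unfold op_zero. split; [|split].
  - intros. symmetry. apply ns_add0.
  - intros. symmetry. apply ns_scal_zero.
  - exists 0. intros. rewrite norm_zero. lra.
Qed.

Lemma bl_add A B : bounded_linear X Y A -> bounded_linear X Y B -> bounded_linear X Y (op_add X Y A B).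
Proof.
  intros [Aa [As [MA HA]]] [Ba [Bs [MB HB]]]. unfold op_add. split; [|split].
  - intros. rewrite Aa, Ba. apply add4.
  - intros. rewrite As, Bs. symmetry. apply ns_scalDv.
  - exists (MA + MB). intros x. eapply Rle_trans; [apply ns_normD|].
    specialize (HA x); specialize (HB x). lra.
Qed.

Lemma bl_scal c A : bounded_linear X Y A -> bounded_linear X Y (op_scal X Y c A).
Proof.
  intros [Aa [As [MA HA]]]. unfold op_scal. split; [|split].
  - intros. rewrite Aa. apply ns_scalDv.
  - intros. rewrite As, !ns_scalA. f_equal. ring.
  - exists (Rabs c * MA). intros x. rewrite ns_normZ. rewrite Rmult_assoc.
    apply Rmult_le_compat_l; auto. apply Rabs_pos.
Qed.

Lemma opnorm_zero : opnorm X Y (op_zero X Y) = 0.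
Proof.
  apply Rle_antisym; [|apply opnorm_nonneg, bl_zero].
  apply opnorm_le. apply bl_zero. intros. unfold op_zero. rewrite norm_zero. lra.
Qed.

Lemma opnorm_add A B : bounded_linear X Y A -> bounded_linear X Y B ->
  opnorm X Y (op_add X Y A B) <= opnorm X Y A + opnorm X Y B.
Proof.
  intros HA HB. apply opnorm_le. apply bl_add; auto. intros x Hx. unfold op_add.
  eapply Rle_trans; [apply ns_normD|].
  pose proof (opnorm_bound A x HA). pose proof (opnorm_bound B x HB).
  pose proof (opnorm_nonneg A HA). pose proof (opnorm_nonneg B HB). pose proof (norm_nonneg _ x).
  nra.
Qed.

Lemma opnorm_scal c A : bounded_linear X Y A -> opnorm X Y (op_scal X Y c A) = Rabs c * opnorm X Y A.
Proof.
  intros HA. pose proof (opnorm_nonneg A HA). apply Rle_antisym.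
  - apply opnorm_le. apply bl_scal; auto. intros x Hx. unfold op_scal. rewrite ns_normZ.
    apply Rmult_le_compat_l. apply Rabs_pos. pose proof (opnorm_bound A x HA).
    pose proof (norm_nonneg _ x). nra.
  - destruct (Req_dec c 0) as [->|Hc].
    + rewrite Rabs_R0, Rmult_0_l. apply opnorm_nonneg, bl_scal; auto.
    + pose proof (Rabs_pos_lt c Hc).
      assert (opnorm X Y A <= opnorm X Y (op_scal X Y c A) / Rabs c).
      { apply opnorm_le; auto. intros x Hx.
        pose proof (opnorm_bound (op_scal X Y c A) x (bl_scal c A HA)).
        change (op_scal X Y c A x) with (ns_scal c (A x)) in H1. rewrite ns_normZ in H1.
        pose proof (opnorm_nonneg _ (bl_scal c A HA)). pose proof (norm_nonneg _ x).
        apply (Rmult_le_reg_l (Rabs c)); auto.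
        replace (Rabs c * (opnorm X Y (op_scal X Y c A) / Rabs c)) with (opnorm X Y (op_scal X Y c A)) by (field; lra).
        nra. }
      apply (Rmult_le_compat_l (Rabs c)) in H1; [|lra].
      replace (Rabs c * (opnorm X Y (op_scal X Y c A) / Rabs c)) with (opnorm X Y (op_scal X Y c A)) in H1 by (field; lra).
      exact H1.
Qed.

Lemma opnorm_sublin : sublin VSF (bounded_linear X Y) (opnorm X Y).
Proof.
  split; [|split].
  - intros u v Hu Hv. apply opnorm_add; auto.
  - intros c u Hc Hu. simpl. rewrite opnorm_scal; auto. rewrite Rabs_pos_eq; lra.
  - apply opnorm_zero.
Qed.

Lemma opnorm_ext T T' : (forall x, T x = T' x) -> opnorm X Y T = opnorm X Y T'.
Proof. intros H. f_equal. apply functional_extensionality. auto. Qed.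

End Ops.

From Stdlib Require Import Reals Lra Lia ClassicalEpsilon Classical FunctionalExtensionality PropExtensionality.
Open Scope R_scope.

Lemma small_inv eps : 0 < eps -> exists N, forall n, (n >= N)%nat -> / (INR n + 1) < eps.
Proof.
  intros He. destruct (archimed_cor1 eps He) as [N [HN HN0]]. exists N. intros n Hn.
  apply le_INR in Hn. assert (0 < INR N) by (apply lt_0_INR; lia).
  eapply Rlt_trans; [|exact HN]. apply Rinv_lt_contravar; [nra|lra].
Qed.

Lemma cv_of_bound u l (C : nat -> R) : (forall n, Rabs (u n - l) < / (INR n + 1)) -> Un_cv u l.
Proof.
  intros H eps He. destruct (small_inv eps He) as [N HN]. exists N. intros n Hn.
  unfold Rdist. eapply Rlt_trans; [apply H|]. apply HN; auto.
Qed.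

Lemma phi_ge (phi : nat -> nat) : (forall n, (phi n < phi (S n))%nat) -> forall n, (n <= phi n)%nat.
Proof. intros H n. induction n; [lia|]. specialize (H n). lia. Qed.

Lemma phi_mono (phi : nat -> nat) : (forall n, (phi n < phi (S n))%nat) ->
  forall n m, (n <= m)%nat -> (phi n <= phi m)%nat.
Proof. intros H n m Hnm. induction Hnm; [lia|]. specialize (H m). lia. Qed.

Lemma subseq_cv u l phi : (forall n, (phi n < phi (S n))%nat) -> Un_cv u l -> Un_cv (fun n => u (phi n)) l.
Proof.
  intros Hp Hu eps He. destruct (Hu eps He) as [N HN]. exists N. intros n Hn.
  apply HN. pose proof (phi_ge phi Hp n). lia.
Qed.

Lemma bw_subseq u M : (forall n, Rabs (u n) <= M) -> exists L, subseq_limit u L.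
Proof.
  intros HM.
  destruct (Bolzano_Weierstrass u (fun c => -M <= c <= M) (compact_P3 _ _)) as [l Hl].
  { intros n. specialize (HM n). unfold Rabs in HM; destruct Rcase_abs in HM; lra. }
  assert (H : forall N k : nat, exists p, (N <= p)%nat /\ Rabs (u p - l) < / (INR k + 1)).
  { intros N k. assert (Hk : 0 < / (INR k + 1)).
    { apply Rinv_0_lt_compat. pose proof (pos_INR k). lra. }
    destruct (Hl (fun x => Rabs (x - l) < / (INR k + 1)) N) as [p [Hp Hp']].
    - exists (mkposreal _ Hk). intros y Hy. exact Hy.
    - exists p. auto. }
  set (g := fun N k => proj1_sig (constructive_indefinite_description _ (H N k))).
  assert (Hg : forall N k, (N <= g N k)%nat /\ Rabs (u (g N k) - l) < / (INR k + 1)).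
  { intros N k. unfold g. destruct (constructive_indefinite_description _ _). exact a. }
  set (phi := fix phi n := match n with O => g O O | S m => g (S (phi m)) (S m) end).
  exists l. exists phi. split.
  - intros n. simpl. destruct (Hg (S (phi n)) (S n)). lia.
  - apply (cv_of_bound _ _ (fun _ => 0)). intros n. destruct n; simpl.
    + apply Hg.
    + apply Hg.
Qed.

Lemma subseq_limit_comp u phi L : (forall n, (phi n < phi (S n))%nat) ->
  subseq_limit (fun n => u (phi n)) L -> subseq_limit u L.
Proof.
  intros Hp [psi [Hpsi Hcv]]. exists (fun n => phi (psi n)). split; auto.
  intros n. pose proof (phi_mono phi Hp (S (psi n)) (psi (S n)) (Hpsi n)). specialize (Hp (psi n)). lia.
Qed.

From Stdlib Require Import Reals Lra Lia ClassicalEpsilon Classical FunctionalExtensionality PropExtensionality.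
Open Scope R_scope.

Section Sip.
Variable Y : NormedSpace.
Variable s : Y -> Y -> R.
Hypothesis Hs : compatible_sip Y s.

Lemma s_zero z : s ns_zero z = 0.
Proof.
  destruct Hs as [H _]. pose proof (H 1 ns_zero ns_zero z).
  rewrite ns_scal1, ns_add0 in H0. lra.
Qed.

Lemma s_add u v z : s (ns_add u v) z = s u z + s v z.
Proof. destruct Hs as [H _]. pose proof (H 1 u v z) as H0. rewrite ns_scal1 in H0. lra. Qed.

Lemma s_scal c u z : s (ns_scal c u) z = c * s u z.
Proof. destruct Hs as [H _]. rewrite <- (ns_add0 _ (ns_scal c u)), H, s_zero. ring. Qed.

Lemma s_bound u v : Rabs (s u v) <= ns_norm u * ns_norm v.
Proof.
  destruct Hs as [_ [_ [Hcs [_ Hn]]]]. specialize (Hcs u v). rewrite !Hn in Hcs.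
  rewrite <- pow2_abs in Hcs. pose proof (Rabs_pos (s u v)).
  pose proof (norm_nonneg _ u). pose proof (norm_nonneg _ v).
  assert (0 <= ns_norm u * ns_norm v) by nra. nra.
Qed.
End Sip.

Section SipExists.
Variable Y : NormedSpace.

Definition DT (y : VSY Y) := True.

Lemma norm_sublin : sublin (VSY Y) DT (@ns_norm Y).
Proof.
  split; [|split].
  - intros u v _ _. apply ns_normD.
  - intros c u Hc _. simpl. rewrite ns_normZ, Rabs_pos_eq; lra.
  - apply norm_zero.
Qed.

Definition supP (u : Y) (f : Y -> R) :=
  linD (VSY Y) DT f /\ (forall z, f z <= ns_norm z) /\ f u = ns_norm u.

Lemma supP_ex u : exists f, supP u f.
Proof.
  destruct (HB_point (VSY Y) DT I (fun _ _ _ _ => I) (fun _ _ _ => I) (@ns_norm Y) u norm_sublin I)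
    as [f [Hf [Hle Hu]]].
  exists f. split; auto. split; auto. intros; apply Hle; exact I.
Qed.

Definition Fs (u : Y) : Y -> R := epsilon (inhabits (fun _ => 0)) (supP u).
Lemma Fs_spec u : supP u (Fs u).
Proof. unfold Fs. apply epsilon_spec. apply supP_ex. Qed.

Lemma Fs_abs u z : Rabs (Fs u z) <= ns_norm z.
Proof.
  destruct (Fs_spec u) as [[_ Hl] [Hle _]].
  pose proof (Hle z). pose proof (Hle (ns_scal (-1) z)).
  assert (H1 : Fs u (ns_scal (-1) z) = -1 * Fs u z) by (apply (Hl (-1) z I)).
  rewrite H1, norm_opp in H0.
  unfold Rabs. destruct Rcase_abs; lra.
Qed.

Definition lineP (y : Y) := fun u : Y => exists c, c <> 0 /\ u = ns_scal c y.
Definition rep (y : Y) : Y := epsilon (inhabits ns_zero) (lineP y).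
Definition coef (y : Y) : R := epsilon (inhabits 0) (fun k => y = ns_scal k (rep y)).

Lemma scal_inj k1 k2 (r : Y) : r <> ns_zero -> ns_scal k1 r = ns_scal k2 r -> k1 = k2.
Proof.
  intros Hr H.
  assert (ns_scal (k1 - k2) r = ns_zero).
  { replace (k1 - k2) with (k1 + - k2) by ring. rewrite ns_scalDs, H, <- ns_scalDs.
    replace (k2 + - k2) with 0 by ring. apply ns_scal0. }
  apply (f_equal ns_norm) in H0. rewrite ns_normZ, norm_zero in H0.
  pose proof (norm_pos _ _ Hr).
  destruct (Req_dec k1 k2); auto. exfalso. pose proof (Rabs_pos_lt (k1 - k2)). 
  assert (k1 - k2 <> 0) by lra. specialize (H3 H4). nra.
Qed.

Lemma rep_spec y : y <> ns_zero -> rep y <> ns_zero /\ y = ns_scal (coef y) (rep y).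
Proof.
  intros Hy.
  assert (Hr : lineP y (rep y)). { unfold rep. apply epsilon_spec. exists y, 1. split; [lra|]. now rewrite ns_scal1. }
  destruct Hr as [c [Hc Hrc]].
  assert (Hrz : rep y <> ns_zero).
  { intro H. rewrite H in Hrc. apply (f_equal ns_norm) in Hrc. rewrite ns_normZ, norm_zero in Hrc.
    pose proof (norm_pos _ _ Hy). pose proof (Rabs_pos_lt c Hc). symmetry in Hrc.
    apply Rmult_integral in Hrc. destruct Hrc; lra. }
  split; auto. unfold coef. apply (epsilon_spec (inhabits 0) (fun k => y = ns_scal k (rep y))).
  exists (/ c). rewrite Hrc, ns_scalA. rewrite Rinv_l; auto. now rewrite ns_scal1.
Qed.

Lemma rep_scal a y : a <> 0 -> rep (ns_scal a y) = rep y.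
Proof.
  intros Ha. unfold rep. f_equal. apply functional_extensionality. intros u.
  apply propositional_extensionality. unfold lineP. split.
  - intros [c [Hc ->]]. exists (c * a). split. intro H. apply Rmult_integral in H. tauto.
    apply ns_scalA.
  - intros [c [Hc ->]]. exists (c / a). split. intro H. unfold Rdiv in H. apply Rmult_integral in H.
    destruct H; auto. apply Rinv_neq_0_compat in Ha. auto.
    rewrite ns_scalA. f_equal. field. auto.
Qed.

Definition sip0 (x y : Y) : R :=
  if excluded_middle_informative (y = ns_zero) then 0
  else coef y * ns_norm (rep y) * Fs (rep y) x.

Lemma sip0_self x : sip0 x x = ns_norm x ^ 2.
Proof.
  unfold sip0. destruct (excluded_middle_informative _) as [->|Hx].
  - rewrite norm_zero. ring.
  - destruct (rep_spec x Hx) as [Hr Hxe].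
    set (r := rep x) in *. set (k := coef x) in *.
    assert (HF : Fs r x = k * ns_norm r).
    { transitivity (Fs r (ns_scal k r)). f_equal. exact Hxe.
      destruct (Fs_spec r) as [[_ Hl] [_ Hu]].
      assert (H1 : Fs r (ns_scal k r) = k * Fs r r) by (apply (Hl k r I)). now rewrite H1, Hu. }
    rewrite HF. replace (ns_norm x) with (ns_norm (ns_scal k r)) by (now rewrite <- Hxe). rewrite ns_normZ. pose proof (pow2_abs k). nra.
Qed.

Lemma sip0_compat : compatible_sip Y sip0.
Proof.
  split; [|split; [|split; [|split]]].
  - intros a x y z. unfold sip0. destruct (excluded_middle_informative _). ring.
    destruct (Fs_spec (rep z)) as [[Ha Hl] _].
    assert (H1 : Fs (rep z) (ns_add (ns_scal a x) y) = Fs (rep z) (ns_scal a x) + Fs (rep z) y)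
      by (apply (Ha _ _ I I)).
    assert (H2 : Fs (rep z) (ns_scal a x) = a * Fs (rep z) x) by (apply (Hl a x I)).
    rewrite H1, H2. ring.
  - intros x Hx. rewrite sip0_self. pose proof (norm_pos _ _ Hx). nra.
  - intros x y. rewrite !sip0_self.
    assert (Rabs (sip0 x y) <= ns_norm x * ns_norm y).
    { unfold sip0. destruct (excluded_middle_informative _) as [->|Hy].
      - rewrite Rabs_R0. pose proof (norm_nonneg _ x). rewrite norm_zero. lra.
      - destruct (rep_spec y Hy) as [Hr Hye].
        replace (ns_norm y) with (ns_norm (ns_scal (coef y) (rep y))) by (now rewrite <- Hye). rewrite ns_normZ. rewrite !Rabs_mult.
        rewrite (Rabs_pos_eq (ns_norm (rep y))) by apply norm_nonneg.
        pose proof (Fs_abs (rep y) x). pose proof (Rabs_pos (coef y)). pose proof (norm_nonneg _ (rep y)).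
        assert (0 <= Rabs (coef y) * ns_norm (rep y)) by nra. nra. }
    rewrite <- pow2_abs. pose proof (Rabs_pos (sip0 x y)).
    pose proof (norm_nonneg _ x). pose proof (norm_nonneg _ y). nra.
  - intros a x y. destruct (Req_dec a 0) as [->|Ha].
    + rewrite ns_scal0. unfold sip0 at 1. destruct (excluded_middle_informative _); [ring|congruence].
    + destruct (classic (y = ns_zero)) as [->|Hy].
      * rewrite ns_scal_zero. unfold sip0. destruct (excluded_middle_informative _); [ring|congruence].
      * assert (Hay : ns_scal a y <> ns_zero).
        { intro H. apply (f_equal ns_norm) in H. rewrite ns_normZ, norm_zero in H.
          pose proof (norm_pos _ _ Hy). pose proof (Rabs_pos_lt a Ha). apply Rmult_integral in H. destruct H; lra. }
        unfold sip0. destruct (excluded_middle_informative _) as [|_]; [congruence|].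
        destruct (excluded_middle_informative _) as [|_]; [congruence|].
        rewrite rep_scal by auto.
        destruct (rep_spec _ Hay) as [Hr1 He1]. destruct (rep_spec _ Hy) as [Hr2 He2].
        rewrite rep_scal in He1 by auto.
        assert (coef (ns_scal a y) = a * coef y).
        { apply (scal_inj _ _ (rep y) Hr2). rewrite <- He1, <- ns_scalA, <- He2. reflexivity. }
        rewrite H. ring.
  - intros x. apply sip0_self.
Qed.
End SipExists.

Lemma norming_ex (X Y : NormedSpace) (T : X -> Y) : bounded_linear X Y T -> T <> op_zero X Y ->
  exists xs, norming_sequence X Y T xs.
Proof.
  intros HT HT0. pose proof (opnorm_pos X Y T HT HT0) as Hpos. set (m := opnorm X Y T) in *.
  assert (H : forall n : nat, exists y, ns_norm y = 1 /\ m - m / (INR n + 1) < ns_norm (T y)).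
  { intros n. assert (Hn : 0 < INR n + 1) by (pose proof (pos_INR n); lra).
    assert (He : 0 < m / (INR n + 2)) by (apply Rdiv_lt_0_compat; lra).
    destruct (opnorm_approx X Y T _ HT He) as [x [Hx Hx']]. fold m in Hx'.
    assert (Hlt : m / (INR n + 2) < m / (INR n + 1)).
    { apply Rmult_lt_compat_l; auto. apply Rinv_lt_contravar; nra. }
    assert (HTx : 0 < ns_norm (T x)).
    { assert (m - m / (INR n + 2) > 0).
      { assert (m / (INR n + 2) <= m / 2).
        { apply Rmult_le_compat_l; [lra|]. pose proof (pos_INR n). apply Rinv_le_contravar; lra. }
        lra. }
      lra. }
    assert (Hx0 : x <> ns_zero). { intro; subst. rewrite lin_zero, norm_zero in HTx; auto. lra. }
    pose proof (norm_pos _ _ Hx0) as Hnx.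
    exists (ns_scal (/ ns_norm x) x). split.
    - rewrite ns_normZ, Rabs_pos_eq. field; lra. left; apply Rinv_0_lt_compat; auto.
    - destruct HT as [_ [Hs _]]. rewrite Hs, ns_normZ, Rabs_pos_eq.
      2:{ left; apply Rinv_0_lt_compat; auto. }
      assert (ns_norm (T x) <= / ns_norm x * ns_norm (T x)).
      { rewrite <- (Rmult_1_l (ns_norm (T x))) at 1. apply Rmult_le_compat_r; [lra|].
        rewrite <- Rinv_1. apply Rinv_le_contravar; lra. }
      lra. }
  set (xs := fun n => proj1_sig (constructive_indefinite_description _ (H n))).
  assert (Hxs : forall n, ns_norm (xs n) = 1 /\ m - m / (INR n + 1) < ns_norm (T (xs n))).
  { intros n. unfold xs. destruct (constructive_indefinite_description _ _). exact a. }
  exists xs. split.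
  - intros n; apply Hxs.
  - intros eps He. destruct (small_inv (eps / m)) as [N HN]. apply Rdiv_lt_0_compat; auto.
    exists N. intros n Hn. specialize (HN n Hn). destruct (Hxs n) as [H1 H2].
    pose proof (opnorm_bound X Y T (xs n) HT). rewrite H1, Rmult_1_r in H0. fold m in H0.
    unfold Rdist. fold m. rewrite Rabs_left1 by lra.
    apply (Rmult_lt_compat_l m) in HN; auto.
    replace (m * (eps / m)) with eps in HN by (field; lra).
    unfold Rdiv in H2. lra.
Qed.

From Stdlib Require Import Reals Lra Lia ClassicalEpsilon Classical FunctionalExtensionality PropExtensionality.
Open Scope R_scope.

Definition LSset (u : nat -> R) := fun c => exists N, forall n, (n >= N)%nat -> u n <= c.
Definition LS (u : nat -> R) := Rinf (LSset u).

Lemma LS_inf u M : (forall n, Rabs (u n) <= M) -> has_inf (LSset u).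
Proof.
  intros HM. split.
  - exists M, O. intros n _. specialize (HM n). unfold Rabs in HM; destruct Rcase_abs in HM; lra.
  - exists (- M). intros c [N HN]. specialize (HN N (le_n N)). specialize (HM N).
    unfold Rabs in HM; destruct Rcase_abs in HM; lra.
Qed.

Lemma LS_le u M : (forall n, Rabs (u n) <= M) -> LS u <= M.
Proof.
  intros HM. apply inf_le. apply (LS_inf u M HM). exists O. intros n _.
  specialize (HM n). unfold Rabs in HM; destruct Rcase_abs in HM; lra.
Qed.

Lemma LS_cv u l M : (forall n, Rabs (u n) <= M) -> Un_cv u l -> LS u = l.
Proof.
  intros HM Hcv. apply Rle_antisym.
  - apply Rnot_lt_le. intro H.
    set (c := (LS u + l) / 2).
    destruct (Hcv (c - l)) as [N HN]. unfold c; lra.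
    assert (LS u <= c).
    { apply inf_le. apply (LS_inf u M HM). exists N. intros n Hn. specialize (HN n Hn).
      unfold Rdist, Rabs in HN. destruct Rcase_abs in HN; lra. }
    unfold c in H0. lra.
  - apply inf_ge. apply (LS_inf u M HM). intros c [N HN].
    apply Rnot_lt_le. intro H. destruct (Hcv (l - c)) as [N' HN']. lra.
    specialize (HN (max N N') ltac:(lia)). specialize (HN' (max N N') ltac:(lia)).
    unfold Rdist, Rabs in HN'. destruct Rcase_abs in HN'; lra.
Qed.

Lemma LS_add u v Mu Mv : (forall n, Rabs (u n) <= Mu) -> (forall n, Rabs (v n) <= Mv) ->
  LS (fun n => u n + v n) <= LS u + LS v.
Proof.
  intros Hu Hv. unfold LS. apply inf_add_pattern.
  - apply (LS_inf u Mu Hu).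
  - apply (LS_inf v Mv Hv).
  - intros x y [N1 H1] [N2 H2]. apply inf_le.
    + apply (LS_inf _ (Mu + Mv)). intros n. eapply Rle_trans; [apply Rabs_triang|].
      specialize (Hu n); specialize (Hv n); lra.
    + exists (max N1 N2). intros n Hn. specialize (H1 n ltac:(lia)). specialize (H2 n ltac:(lia)). lra.
Qed.

Lemma LS_scal u M c : 0 < c -> (forall n, Rabs (u n) <= M) -> LS (fun n => c * u n) = c * LS u.
Proof.
  intros Hc HM.
  assert (HM' : forall n, Rabs (c * u n) <= c * M).
  { intros n. rewrite Rabs_mult, Rabs_pos_eq by lra. apply Rmult_le_compat_l; auto; lra. }
  unfold LS. apply Rle_antisym.
  - assert (H : Rinf (LSset (fun n => c * u n)) / c <= Rinf (LSset u)).
    { apply inf_ge. apply (LS_inf u M HM). intros x [N HN].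
      assert (Rinf (LSset (fun n => c * u n)) <= c * x).
      { apply inf_le. apply (LS_inf _ _ HM'). exists N. intros n Hn. specialize (HN n Hn).
        apply Rmult_le_compat_l; lra. }
      apply (Rmult_le_reg_l c); auto.
      replace (c * (Rinf (LSset (fun n => c * u n)) / c)) with (Rinf (LSset (fun n => c * u n))) by (field; lra).
      lra. }
    apply (Rmult_le_compat_l c) in H; [|lra].
    replace (c * (Rinf (LSset (fun n => c * u n)) / c)) with (Rinf (LSset (fun n => c * u n))) in H by (field; lra).
    exact H.
  - apply inf_ge. apply (LS_inf _ _ HM'). intros x [N HN].
    assert (Rinf (LSset u) <= x / c).
    { apply inf_le. apply (LS_inf u M HM). exists N. intros n Hn. specialize (HN n Hn).
      apply (Rmult_le_reg_l c); auto.
      replace (c * (x / c)) with x by (field; lra). lra. }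
    apply (Rmult_le_compat_l c) in H; [|lra].
    replace (c * (x / c)) with x in H by (field; lra). exact H.
Qed.

Lemma cv_ext u v l : (forall n, u n = v n) -> Un_cv u l -> Un_cv v l.
Proof. intros H Hu eps He. destruct (Hu eps He) as [N HN]. exists N. intros n Hn. rewrite <- H. auto. Qed.

Lemma vadd4 (V : VS) (a b c d : V) : vadd (vadd a b) (vadd c d) = vadd (vadd a c) (vadd b d).
Proof.
  rewrite <- !(vaddA V). f_equal. rewrite !(vaddA V). f_equal. apply (vaddC V).
Qed.

Lemma vcomb (V : VS) (w u : V) a b :
  vadd (vadd w (vscal a u)) (vadd (vscal (-1) w) (vscal b u)) = vscal (a + b) u.
Proof.
  rewrite vadd4, vI9, (vscalDs V). rewrite (vaddC V). apply (vadd0 V).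
Qed.

From Stdlib Require Import Reals Lra Lia ClassicalEpsilon Classical FunctionalExtensionality PropExtensionality.
Open Scope R_scope.

Section Main.
Variables X Y : NormedSpace.
Variable T : X -> Y.
Hypothesis hT : bounded_linear X Y T.

Lemma a_bound s (xs : nat -> X) B n : compatible_sip Y s -> ns_norm (xs n) = 1 ->
  bounded_linear X Y B -> Rabs (s (B (xs n)) (T (xs n))) <= opnorm X Y B * opnorm X Y T.
Proof.
  intros Hs Hn HB. eapply Rle_trans; [apply (s_bound Y s Hs)|].
  pose proof (opnorm_bound X Y B (xs n) HB). pose proof (opnorm_bound X Y T (xs n) hT).
  rewrite Hn, Rmult_1_r in H, H0.
  apply Rmult_le_compat; auto; apply norm_nonneg.
Qed.

Lemma cond_add s xs B1 B2 : compatible_sip Y s -> (forall n, ns_norm (xs n) = 1) ->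
  bounded_linear X Y B1 -> bounded_linear X Y B2 ->
  (forall L, subseq_limit (fun n => s (B1 (xs n)) (T (xs n))) L -> L = 0) ->
  (forall L, subseq_limit (fun n => s (B2 (xs n)) (T (xs n))) L -> L = 0) ->
  (forall L, subseq_limit (fun n => s (op_add X Y B1 B2 (xs n)) (T (xs n))) L -> L = 0).
Proof.
  intros Hs Hxs HB1 HB2 H1 H2 L [phi [Hphi Hcv]].
  destruct (bw_subseq (fun n => s (B1 (xs (phi n))) (T (xs (phi n)))) (opnorm X Y B1 * opnorm X Y T))
    as [L1 HL1].
  { intros n. apply a_bound; auto. }
  assert (HL1' := HL1). destruct HL1' as [psi [Hpsi Hcv1]].
  apply (subseq_limit_comp (fun n => s (B1 (xs n)) (T (xs n))) phi) in HL1; auto. apply H1 in HL1. subst L1.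
  assert (Hc : Un_cv (fun n => s (B2 (xs (phi (psi n)))) (T (xs (phi (psi n))))) (L - 0)).
  { apply (cv_ext (fun n => s (op_add X Y B1 B2 (xs (phi (psi n)))) (T (xs (phi (psi n))))
                                        - s (B1 (xs (phi (psi n)))) (T (xs (phi (psi n)))))).
    - intros n. unfold op_add. rewrite (s_add Y s Hs). ring.
    - apply CV_minus; auto. apply (subseq_cv (fun n => s (op_add X Y B1 B2 (xs (phi n))) (T (xs (phi n))))); auto. }
  assert (subseq_limit (fun n => s (B2 (xs n)) (T (xs n))) (L - 0)).
  { exists (fun n => phi (psi n)). split; auto.
    intros n. pose proof (phi_mono phi Hphi (S (psi n)) (psi (S n)) (Hpsi n)). specialize (Hphi (psi n)). lia. }
  apply H2 in H. lra.
Qed.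

Lemma cv_const c : Un_cv (fun _ => c) c.
Proof. intros eps He. exists O. intros. unfold Rdist. rewrite Rminus_diag_eq, Rabs_R0; auto. Qed.

Hypothesis hT0 : T <> op_zero X Y.

Lemma BJ_cond_dir : smooth_point X Y T -> forall A, bounded_linear X Y A -> BJ_orth X Y T A ->
  forall s, compatible_sip Y s -> forall xs, norming_sequence X Y T xs ->
  forall L, subseq_limit (fun n => s (A (xs n)) (T (xs n))) L -> L = 0.
Proof.
  intros [Hex Huniq] A HA HBJ s Hs xs [Hxs1 Hxs2] L [phi [Hphi Hcv]].
  pose proof (opnorm_pos X Y T hT hT0) as Hpos.
  set (m := opnorm X Y T) in *.
  set (a := fun B n => s (B (xs (phi n))) (T (xs (phi n)))).
  assert (Ha_b : forall B, bounded_linear X Y B -> forall n, Rabs (a B n) <= opnorm X Y B * m).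
  { intros B HB n. apply a_bound; auto. }
  set (P1 := fun B => LS (a B)).
  assert (Hsub1 : sublin (VSF X Y) (bounded_linear X Y) P1).
  { split; [|split].
    - intros u v Hu Hv. unfold P1.
      replace (a (vadd u v)) with (fun n => a u n + a v n).
      + apply (LS_add _ _ _ _ (Ha_b u Hu) (Ha_b v Hv)).
      + apply functional_extensionality. intros n. unfold a. simpl. unfold op_add. rewrite (s_add Y s Hs). reflexivity.
    - intros c u Hc Hu. unfold P1.
      replace (a (vscal c u)) with (fun n => c * a u n).
      + apply (LS_scal _ _ c Hc (Ha_b u Hu)).
      + apply functional_extensionality. intros n. unfold a. simpl. unfold op_scal. rewrite (s_scal Y s Hs). reflexivity.
    - unfold P1. apply (LS_cv _ _ 0).
      + intros n. unfold a. simpl. unfold op_zero. rewrite (s_zero Y s Hs), Rabs_R0. lra.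
      + intros eps He. exists O. intros n _. unfold a. simpl. unfold op_zero. rewrite (s_zero Y s Hs). unfold Rdist. rewrite Rminus_0_r, Rabs_R0. lra. }
  destruct (HB_point (VSF X Y) (bounded_linear X Y) (bl_zero X Y) (bl_add X Y) (fun c u H => bl_scal X Y c u H) P1 A Hsub1 HA)
    as [f1 [[Hf1a Hf1s] [Hf1le Hf1A]]].
  assert (HP1A : P1 A = L). { apply (LS_cv _ _ _ (Ha_b A HA)). exact Hcv. }
  assert (HcvT : Un_cv (a T) (m * m)).
  { apply (cv_ext (fun n => ns_norm (T (xs (phi n))) * ns_norm (T (xs (phi n))))).
    - intros n. unfold a. destruct Hs as [_ [_ [_ [_ Hn]]]]. rewrite Hn. ring.
    - apply CV_mult; apply (subseq_cv (fun n => ns_norm (T (xs n)))); auto. }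
  assert (HP1T : P1 T = m * m). { apply (LS_cv _ _ _ (Ha_b T hT)). exact HcvT. }
  assert (HP1mT : P1 (op_scal X Y (-1) T) = -1 * (m * m)).
  { apply (LS_cv _ _ _ (Ha_b _ (bl_scal X Y (-1) T hT))).
    apply (cv_ext (fun n => (-1) * a T n)).
    - intros n. unfold a, op_scal. rewrite (s_scal Y s Hs). reflexivity.
    - apply CV_mult; auto. apply cv_const. }
  assert (Hf1T : f1 T = m * m).
  { apply Rle_antisym.
    - rewrite <- HP1T. apply Hf1le; auto.
    - assert (E : f1 (op_scal X Y (-1) T) = -1 * f1 T) by exact (Hf1s (-1) T hT).
      pose proof (Hf1le _ (bl_scal X Y (-1) T hT)). rewrite E, HP1mT in H. lra. }
  assert (Hf1abs : forall B, bounded_linear X Y B -> Rabs (f1 B) <= opnorm X Y B * m).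
  { intros B HB. assert (E : f1 (op_scal X Y (-1) B) = -1 * f1 B) by exact (Hf1s (-1) B HB).
    pose proof (Hf1le _ (bl_scal X Y (-1) B HB)) as H1. rewrite E in H1.
    pose proof (Hf1le _ HB) as H2.
    pose proof (LS_le _ _ (Ha_b B HB)) as H3.
    pose proof (LS_le _ _ (Ha_b _ (bl_scal X Y (-1) B HB))) as H4.
    rewrite opnorm_scal, Rabs_m1, Rmult_1_l in H4 by auto.
    fold (P1 B) in H3. fold (P1 (op_scal X Y (-1) B)) in H4.
    unfold Rabs. destruct Rcase_abs; lra. }
  set (g1 := fun B => f1 B / m).
  assert (Hg1 : support_functional X Y T g1).
  { split; [|split; [|split]].
    - intros A0 B0 HA0 HB0. unfold g1.
      assert (E : f1 (op_add X Y A0 B0) = f1 A0 + f1 B0) by exact (Hf1a A0 B0 HA0 HB0).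
      rewrite E. field. lra.
    - intros c A0 HA0. unfold g1.
      assert (E : f1 (op_scal X Y c A0) = c * f1 A0) by exact (Hf1s c A0 HA0).
      rewrite E. field. lra.
    - intros B HB. unfold g1. unfold Rdiv. rewrite Rabs_mult, Rabs_inv, (Rabs_pos_eq m) by lra.
      pose proof (Hf1abs B HB).
      apply (Rmult_le_reg_r m); auto. rewrite Rmult_assoc, Rinv_l by lra. lra.
    - unfold g1. rewrite Hf1T. fold m. field. lra. }
  set (F2 := fun B r => exists l, r = opnorm X Y (op_add X Y B (op_scal X Y l A))).
  set (P2 := fun B => Rinf (F2 B)).
  assert (HF2 : forall B, bounded_linear X Y B -> has_inf (F2 B)).
  { intros B HB. split.
    - exists (opnorm X Y (op_add X Y B (op_scal X Y 0 A))), 0. reflexivity.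
    - exists 0. intros x [l ->]. apply opnorm_nonneg. apply bl_add; auto. apply bl_scal; auto. }
  assert (HP2le : forall B l, bounded_linear X Y B -> P2 B <= opnorm X Y (op_add X Y B (op_scal X Y l A))).
  { intros B l HB. apply inf_le; auto. exists l. reflexivity. }
  assert (Hsub2 : sublin (VSF X Y) (bounded_linear X Y) P2).
  { split; [|split].
    - intros u v Hu Hv. simpl. unfold P2. apply inf_add_pattern; auto.
      intros x y [l1 ->] [l2 ->].
      eapply Rle_trans. apply (HP2le _ (l1 + l2)). apply bl_add; auto.
      assert (E : op_add X Y (op_add X Y u v) (op_scal X Y (l1 + l2) A) =
                  op_add X Y (op_add X Y u (op_scal X Y l1 A)) (op_add X Y v (op_scal X Y l2 A)))
        by exact (vI4 (VSF X Y) u v l1 l2 A).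
      rewrite E. apply opnorm_add; apply bl_add; auto; apply bl_scal; auto.
    - intros c u Hc Hu. unfold P2. simpl.
      assert (Hcu : bounded_linear X Y (op_scal X Y c u)) by (apply bl_scal; auto).
      assert (E : forall t, op_scal X Y c (op_add X Y u (op_scal X Y t A)) =
                           op_add X Y (op_scal X Y c u) (op_scal X Y (c * t) A))
        by (intros t; exact (vI5 (VSF X Y) c u t A)).
      assert (Hn : forall t, opnorm X Y (op_scal X Y c (op_add X Y u (op_scal X Y t A))) =
                            c * opnorm X Y (op_add X Y u (op_scal X Y t A))).
      { intros t. rewrite opnorm_scal, Rabs_pos_eq; try lra. apply bl_add; auto. apply bl_scal; auto. }
      apply Rle_antisym.
      + assert (H : Rinf (F2 (op_scal X Y c u)) / c <= Rinf (F2 u)).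
        { apply inf_ge; auto. intros x [t ->].
          assert (Rinf (F2 (op_scal X Y c u)) <= c * opnorm X Y (op_add X Y u (op_scal X Y t A))).
          { apply inf_le; auto. exists (c * t). rewrite <- Hn, E. reflexivity. }
          apply (Rmult_le_reg_l c); auto.
          replace (c * (Rinf (F2 (op_scal X Y c u)) / c)) with (Rinf (F2 (op_scal X Y c u))) by (field; lra).
          lra. }
        apply (Rmult_le_compat_l c) in H; [|lra].
        replace (c * (Rinf (F2 (op_scal X Y c u)) / c)) with (Rinf (F2 (op_scal X Y c u))) in H by (field; lra).
        exact H.
      + apply inf_ge; auto. intros x [t ->].
        replace (op_add X Y (op_scal X Y c u) (op_scal X Y t A))
          with (op_scal X Y c (op_add X Y u (op_scal X Y (t / c) A))).
        2:{ rewrite E. f_equal. f_equal. field. lra. }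
        rewrite Hn. apply Rmult_le_compat_l; [lra|]. apply HP2le; auto.
    - unfold P2. simpl. apply Rle_antisym.
      + eapply Rle_trans. apply (HP2le _ 0). apply bl_zero.
        assert (E : op_add X Y (op_zero X Y) (op_scal X Y 0 A) = op_zero X Y).
        { transitivity (op_scal X Y 0 A). exact (vI6 (VSF X Y) 0 A). exact (vscal0 (VSF X Y) A). }
        rewrite E, opnorm_zero. lra.
      + apply inf_ge. apply HF2, bl_zero. intros x [l ->]. apply opnorm_nonneg.
        apply bl_add. apply bl_zero. apply bl_scal; auto. }
  destruct (HB_point (VSF X Y) (bounded_linear X Y) (bl_zero X Y) (bl_add X Y) (fun c u H => bl_scal X Y c u H) P2 T Hsub2 hT)
    as [f2 [[Hf2a Hf2s] [Hf2le Hf2T]]].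
  assert (HP2T : P2 T = m).
  { apply Rle_antisym.
    - eapply Rle_trans. apply (HP2le _ 0 hT).
      assert (E : op_add X Y T (op_scal X Y 0 A) = T) by exact (vI2 (VSF X Y) T A).
      rewrite E. unfold m; lra.
    - apply inf_ge; auto. intros x [l ->]. apply HBJ. }
  assert (Hf2A : f2 A = 0).
  { assert (E1 : op_add X Y A (op_scal X Y (-1) A) = op_zero X Y) by exact (vI9 (VSF X Y) A).
    assert (E2 : op_add X Y (op_scal X Y (-1) A) (op_scal X Y 1 A) = op_zero X Y) by exact (vI3 (VSF X Y) A).
    pose proof (HP2le A (-1) HA) as H1. rewrite E1, opnorm_zero in H1.
    pose proof (HP2le _ 1 (bl_scal X Y (-1) A HA)) as H2. rewrite E2, opnorm_zero in H2.
    pose proof (Hf2le A HA). pose proof (Hf2le _ (bl_scal X Y (-1) A HA)).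
    assert (E : f2 (op_scal X Y (-1) A) = -1 * f2 A) by exact (Hf2s (-1) A HA).
    rewrite E in H0. fold (P2 A) in H. fold (P2 (op_scal X Y (-1) A)) in H0. lra. }
  assert (Hg2 : support_functional X Y T f2).
  { split; [|split; [|split]].
    - intros A0 B0 HA0 HB0. exact (Hf2a A0 B0 HA0 HB0).
    - intros c A0 HA0. exact (Hf2s c A0 HA0).
    - intros B HB.
      assert (E0 : forall B', op_add X Y B' (op_scal X Y 0 A) = B') by (intros; exact (vI2 (VSF X Y) B' A)).
      pose proof (HP2le B 0 HB) as H1. rewrite E0 in H1.
      pose proof (HP2le _ 0 (bl_scal X Y (-1) B HB)) as H2. rewrite E0, opnorm_scal, Rabs_m1, Rmult_1_l in H2 by auto.
      pose proof (Hf2le B HB). pose proof (Hf2le _ (bl_scal X Y (-1) B HB)).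
      assert (E : f2 (op_scal X Y (-1) B) = -1 * f2 B) by exact (Hf2s (-1) B HB).
      rewrite E in H0. fold (P2 B) in H. fold (P2 (op_scal X Y (-1) B)) in H0.
      unfold Rabs. destruct Rcase_abs; lra.
    - rewrite Hf2T. exact HP2T. }
  pose proof (Huniq g1 f2 Hg1 Hg2 A HA). unfold g1 in H. rewrite Hf1A, HP1A, Hf2A in H.
  apply (Rmult_eq_compat_r m) in H. unfold Rdiv in H. rewrite Rmult_assoc, Rinv_l in H by lra. lra.
Qed.


Lemma cond_BJ_dir A : bounded_linear X Y A ->
  (forall s, compatible_sip Y s -> forall xs, norming_sequence X Y T xs ->
   forall L, subseq_limit (fun n => s (A (xs n)) (T (xs n))) L -> L = 0) -> BJ_orth X Y T A.
Proof.
  intros HA Hc l.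
  pose proof (opnorm_pos X Y T hT hT0) as Hpos.
  set (m := opnorm X Y T) in *.
  pose proof (sip0_compat Y) as Hs0. set (s0 := sip0 Y) in *.
  destruct (norming_ex X Y T hT hT0) as [xs Hxs]. pose proof Hxs as [Hxs1 Hxs2].
  destruct (bw_subseq (fun n => s0 (A (xs n)) (T (xs n))) (opnorm X Y A * m)) as [L HL].
  { intros n. apply a_bound; auto. }
  pose proof (Hc s0 Hs0 xs Hxs L HL) as HL0. subst L.
  destruct HL as [phi [Hphi Hcv]].
  set (C := op_add X Y T (op_scal X Y l A)).
  assert (HC : bounded_linear X Y C) by (apply bl_add; auto; apply bl_scal; auto).
  assert (Hin : forall n, ns_norm (T (xs (phi n))) * ns_norm (T (xs (phi n))) + l * s0 (A (xs (phi n))) (T (xs (phi n)))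
                          <= opnorm X Y C * ns_norm (T (xs (phi n)))).
  { intros n. set (x := xs (phi n)).
    assert (E : s0 (C x) (T x) = ns_norm (T x) * ns_norm (T x) + l * s0 (A x) (T x)).
    { unfold C, op_add, op_scal. rewrite (s_add Y s0 Hs0), (s_scal Y s0 Hs0).
      destruct Hs0 as [_ [_ [_ [_ Hn]]]]. rewrite Hn. ring. }
    rewrite <- E. eapply Rle_trans. apply RRle_abs. eapply Rle_trans. apply (s_bound Y s0 Hs0).
    apply Rmult_le_compat_r. apply norm_nonneg.
    pose proof (opnorm_bound X Y C x HC). unfold x in H. rewrite Hxs1, Rmult_1_r in H. exact H. }
  assert (Hn : Un_cv (fun n => ns_norm (T (xs (phi n)))) m) by (apply (subseq_cv (fun n => ns_norm (T (xs n)))); auto).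
  pose proof (Rle_cv_lim Hin (CV_plus _ _ _ _ (CV_mult _ _ _ _ Hn Hn) (CV_mult _ _ _ _ (cv_const l) Hcv))
                              (CV_mult _ _ _ _ (cv_const (opnorm X Y C)) Hn)).
  fold C. nra.
Qed.

Lemma smooth_of_ii :
  (forall A : X -> Y, bounded_linear X Y A ->
     (BJ_orth X Y T A <->
      (forall s : Y -> Y -> R, compatible_sip Y s ->
       forall xs : nat -> X, norming_sequence X Y T xs ->
       forall L : R, subseq_limit (fun n => s (A (xs n)) (T (xs n))) L ->
       L = 0))) -> smooth_point X Y T.
Proof.
  intros Hii.
  pose proof (opnorm_pos X Y T hT hT0) as Hpos.
  set (m := opnorm X Y T) in *.
  split.
  - destruct (HB_point (VSF X Y) (bounded_linear X Y) (bl_zero X Y) (bl_add X Y) (fun c u H => bl_scal X Y c u H)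
       (opnorm X Y) T (opnorm_sublin X Y) hT) as [f [[Hfa Hfs] [Hfle HfT]]].
    exists f. split; [|split; [|split]].
    + intros A0 B0 HA0 HB0. exact (Hfa A0 B0 HA0 HB0).
    + intros c A0 HA0. exact (Hfs c A0 HA0).
    + intros B HB. pose proof (Hfle B HB). pose proof (Hfle _ (bl_scal X Y (-1) B HB)).
      assert (E : f (op_scal X Y (-1) B) = -1 * f B) by exact (Hfs (-1) B HB).
      rewrite E in H0. simpl in H0. rewrite opnorm_scal, Rabs_m1 in H0 by auto.
      unfold Rabs. destruct Rcase_abs; lra.
    + exact HfT.
  - intros f g [Hfa [Hfs [Hfb HfT]]] [Hga [Hgs [Hgb HgT]]] B HB. apply NNPP. intros Hne.
    set (c1 := f B / m). set (C1 := op_add X Y B (op_scal X Y (-c1) T)).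
    set (c2 := g B / m). set (C2 := op_add X Y (op_scal X Y (-1) B) (op_scal X Y c2 T)).
    assert (HC1 : bounded_linear X Y C1) by (apply bl_add; auto; apply bl_scal; auto).
    assert (HC2 : bounded_linear X Y C2) by (apply bl_add; apply bl_scal; auto).
    assert (Hf0 : f C1 = 0).
    { unfold C1. rewrite Hfa, Hfs, HfT by (auto; apply bl_scal; auto). fold m. unfold c1. field. lra. }
    assert (Hg0 : g C2 = 0).
    { unfold C2. rewrite Hga, !Hgs, HgT by (auto; apply bl_scal; auto). fold m. unfold c2. field. lra. }
    assert (BJ1 : BJ_orth X Y T C1).
    { intros l. assert (Hb : bounded_linear X Y (op_add X Y T (op_scal X Y l C1))) by (apply bl_add; auto; apply bl_scal; auto).
      pose proof (Hfb _ Hb). rewrite Hfa, Hfs, Hf0, HfT in H by (auto; apply bl_scal; auto).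
      eapply Rle_trans; [|exact H]. rewrite Rmult_0_r, Rplus_0_r. apply RRle_abs. }
    assert (BJ2 : BJ_orth X Y T C2).
    { intros l. assert (Hb : bounded_linear X Y (op_add X Y T (op_scal X Y l C2))) by (apply bl_add; auto; apply bl_scal; auto).
      pose proof (Hgb _ Hb). rewrite Hga, Hgs, Hg0, HgT in H by (auto; apply bl_scal; auto).
      eapply Rle_trans; [|exact H]. rewrite Rmult_0_r, Rplus_0_r. apply RRle_abs. }
    pose proof (proj1 (Hii C1 HC1) BJ1) as K1. pose proof (proj1 (Hii C2 HC2) BJ2) as K2.
    assert (HC12 : bounded_linear X Y (op_add X Y C1 C2)) by (apply bl_add; auto).
    assert (K12 : BJ_orth X Y T (op_add X Y C1 C2)).
    { apply (proj2 (Hii _ HC12)). intros s Hs xs Hxs L HL.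
      exact (cond_add s xs C1 C2 Hs (proj1 Hxs) HC1 HC2 (K1 s Hs xs Hxs) (K2 s Hs xs Hxs) L HL). }
    set (k := -c1 + c2).
    assert (Hk : k <> 0).
    { intro Hk. apply Hne. unfold k, c1, c2 in Hk.
      apply (Rmult_eq_reg_r (/ m)). unfold Rdiv in Hk. lra. apply Rinv_neq_0_compat. lra. }
    assert (Esum : op_add X Y C1 C2 = op_scal X Y k T) by exact (vcomb (VSF X Y) B T (-c1) c2).
    specialize (K12 (- / k)). rewrite Esum in K12.
    assert (E : op_add X Y T (op_scal X Y (- / k) (op_scal X Y k T)) = op_zero X Y).
    { apply functional_extensionality. intros x. unfold op_add, op_scal, op_zero.
      rewrite ns_scalA. rewrite <- (ns_scal1 _ (T x)) at 1. rewrite <- ns_scalDs.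
      replace (1 + - / k * k) with 0 by (field; auto). apply ns_scal0. }
    rewrite E, opnorm_zero in K12. fold m in K12. lra.
Qed.

End Main.

Theorem theorem2p1 (X Y : NormedSpace) (T : X -> Y)
  (hT : bounded_linear X Y T) (hT0 : T <> op_zero X Y) :
  smooth_point X Y T <->
  (forall A : X -> Y, bounded_linear X Y A ->
     (BJ_orth X Y T A <->
      (forall s : Y -> Y -> R, compatible_sip Y s ->
       forall xs : nat -> X, norming_sequence X Y T xs ->
       forall L : R, subseq_limit (fun n => s (A (xs n)) (T (xs n))) L ->
       L = 0))).
Proof.
  split.
  - intros Hsm A HA. split.
    + apply (BJ_cond_dir X Y T hT hT0 Hsm A HA).
    + apply (cond_BJ_dir X Y T hT hT0 A HA).
  - apply (smooth_of_ii X Y T hT hT0).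
Qed.
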